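(* Let $G=H\langle a\rangle$ be a finite group, where $H$ is a normal abelian subgroup of $G$ and the order of $a$ is coprime to $|H|$. Then $\mathcal R(a)=[H,a]$.
   Context: Commutators: $[x,y]=x^{-1}y^{-1}xy$, left-normed, and $[x,{}_n\,y]=[x,y,\dots,y]$ with $y$ repeated $n$ times. $\mathcal R(a)$ denotes the minimal right Engel sink of $a$ in $G$: the smallest subset of $G$ such that for every $x\in G$ the commutators $[a,{}_n\,x]$ lie in it for all sufficiently large $n$ (for finite $G$ it exists). $[H,a]$ denotes the subgroup generated by all $h^{-1}h^{a}$, $h\in H$. *)

(* Defs.v *)
From mathcomp Require Import all_boot all_fingroup.
Set Implicit Arguments. Unset Strict Implicit. Unset Printing Implicit Defensive.
Local Open Scope group_scope.

(* Left-normed iterated commutator [a, _n x] = [a, x, ..., x] (x repeated n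
   times); mathcomp's [~ u, v] is u^-1 * v^-1 * u * v. *)
Definition engel_comm (gT : finGroupType) (a x : gT) (n : nat) : gT :=
  iter n (fun y => [~ y, x]) a.

Definition right_Engel_sink (gT : finGroupType) (G : {set gT}) (a : gT)
    (S : {set gT}) : Prop :=
  S \subset G /\
  forall x, x \in G -> exists m, forall n, m <= n -> engel_comm a x n \in S.

Definition minimal_right_Engel_sink (gT : finGroupType) (G : {set gT})
    (a : gT) (S : {set gT}) : Prop :=
  right_Engel_sink G a S /\
  forall T : {set gT}, right_Engel_sink G a T -> S \subset T.

Definition comm_subgroup_elt (gT : finGroupType) (H : {set gT}) (a : gT)
    : {set gT} :=
  <<[set h^-1 * h ^ a | h in H]>>.

(* Main.v *)
Require Import Defs.
From mathcomp Require Import all_boot all_fingroup.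
From mathcomp Require Import commutator finmodule.
Local Open Scope group_scope.

Theorem lemma2p2 (gT : finGroupType) (G H : {group gT}) (a : gT) :
  H <| G -> abelian H -> (H * <[a]>)%g = G -> coprime #[a] #|H| ->
  minimal_right_Engel_sink G a (comm_subgroup_elt H a).
Proof.
move=> nHG abH defG co.
have aG : a \in G by rewrite -defG; apply/mulsgP; exists 1 a; rewrite ?group1 ?cycle_id ?mul1g.
have nHa : <[a]> \subset 'N(H).
  by rewrite cycle_subG (subsetP (normal_norm nHG)).
have cJ u v : u \in H -> v \in H -> u ^ v = u.
  by move=> Hu Hv; rewrite conjgE (centsP abH _ Hu _ Hv) mulKg.
have cH u v : u \in H -> v \in H -> [~ u, v] = 1.
  by move=> Hu Hv; apply/eqP/commgP; exact: (centsP abH _ Hu _ Hv).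
have KE : comm_subgroup_elt H a = [~: H, <[a]>].
  apply/eqP; rewrite eqEsubset; apply/andP; split.
    rewrite gen_subG; apply/subsetP=> _ /imsetP[h Hh ->].
    exact: (mem_commg Hh (cycle_id a)).
  rewrite gen_subG; apply/subsetP=> _ /imset2P[h c Hh /cycleP[k ->] ->].
  elim: k h Hh => [|k IH] h Hh; first by rewrite expg0 commg1 group1.
  have -> : [~ h, a ^+ k.+1] = [~ h, a ^+ k] * [~ h ^ (a ^+ k), a].
    by rewrite expgSr !commgEl conjgM [RHS]mulgA mulgK.
  rewrite groupM ?IH //; apply: mem_gen; apply/imsetP; exists (h ^ (a ^+ k)) => //.
  by rewrite memJ_norm // (subsetP nHa) // mem_cycle.
rewrite KE.
set R := [~: H, <[a]>].
have sRH : R \subset H by rewrite commg_subl.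
have nRG : G \subset 'N(R).
  by rewrite -defG mul_subG // ?commg_norml ?commg_normr.
have sRG : R \subset G := subset_trans sRH (normal_sub nHG).
have RH y : y \in R -> y \in H := subsetP sRH y.
have psiR y : y \in R -> [~ y, a] \in R.
  by move=> Ry; rewrite /commg groupM ?groupV ?memJ_norm // (subsetP nRG).
have psiM y1 y2 : y1 \in H -> y2 \in H -> [~ y1 * y2, a] = [~ y1, a] * [~ y2, a].
  move=> H1 H2; rewrite commMgJ cJ //.
  by rewrite /commg groupM ?groupV ?memJ_norm // (subsetP nHa) ?cycle_id.
have psiV y : y \in H -> [~ y^-1, a] = [~ y, a]^-1.
  move=> Hy; apply/esym/eqP; rewrite eq_invg_mul -psiM ?groupV //.
  by rewrite mulgV comm1g.
have TI : 'C_R(<[a]>) = 1.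
  by apply: coprime_abel_cent_TI => //; rewrite coprime_sym.
have psi_inj y y' : y \in R -> y' \in R -> [~ y, a] = [~ y', a] -> y = y'.
  move=> Ry Ry' e.
  set w := y' * y^-1.
  have Rw : w \in R by rewrite groupM ?groupV.
  have e2 : [~ y', a] = [~ w, a] * [~ y, a].
    by rewrite -psiM ?RH // /w mulgKV.
  have w1 : [~ w, a] = 1.
    by apply: (@mulIg _ [~ y, a]); rewrite mul1g -e2 e.
  have : w \in 'C_R(<[a]>).
    by rewrite inE Rw cent_cycle; apply/cent1P/commgP; rewrite w1.
  rewrite TI => /set1P w1'.
  by rewrite -(mulgKV y y') -/w w1' mul1g.
have iterR z n : z \in R -> iter n (fun y => [~ y, a]) z \in R.
  by move=> Rz; elim: n => [|n IH] //=; rewrite psiR.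
split.
  split; first exact: sRG.
  move=> x Gx; exists 1%N => n; case: n => // n _; elim: n => [|n IH].
    rewrite /engel_comm /= -invg_comm groupV.
    move: Gx; rewrite -defG => /mulsgP[h c Hh /cycleP[k ->] ->].
    rewrite commMgJ.
    have /commgP/eqP -> : commute (a ^+ k) a.
      exact: commute_sym (commuteX k (commute_refl a)).
    rewrite mulg1 memJ_norm ?(mem_commg Hh (cycle_id a)) //.
    by rewrite (subsetP (commg_normr _ _)) // mem_cycle.
  rewrite /engel_comm iterS -/(engel_comm a x n.+1).
  by rewrite commgEl groupM ?groupV ?memJ_norm // (subsetP nRG).
move=> T [sTG sinkT]; apply/subsetP=> z Rz.
pose f (i : 'I_#|gT|.+1) := iter i (fun y => [~ y, a]) z.
have : ~~ injectiveb f.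
  apply/negP => /injectiveP injf.
  by have := leq_card f injf; rewrite card_ord ltnn.
case/injectivePn => i [j] neij eij.
have back : forall i0 d, iter i0 (fun y => [~ y, a]) z =
     iter (i0 + d) (fun y => [~ y, a]) z -> z = iter d (fun y => [~ y, a]) z.
  elim=> [|i0 IH] d; first by rewrite add0n.
  rewrite addSn !iterS => e; apply: IH; apply: psi_inj e; exact: iterR.
have [d d_gt0 zd] : exists2 d, 0 < d & iter d (fun y => [~ y, a]) z = z.
  case: (ltngtP i j) => [ltij|ltji|eq_ij].
  - exists (j - i); first by rewrite subn_gt0.
    by apply/esym/(back i); rewrite subnKC 1?ltnW.
  - exists (i - j); first by rewrite subn_gt0.
    by apply/esym/(back j); rewrite subnKC 1?ltnW.
  - by case/eqP: neij; apply: val_inj.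
have zkd k : iter (k * d) (fun y => [~ y, a]) z = z.
  by elim: k => [|k IH] //; rewrite mulSn iterD IH zd.
have Hz := RH z Rz.
have Gx : a * z^-1 \in G by rewrite groupM ?groupV // (subsetP sRG).
have eng n : engel_comm a (a * z^-1) n.+1 = iter n.+1 (fun y => [~ y, a]) z.
  elim: n => [|n IH].
    rewrite /engel_comm /= commgMJ commgg conj1g mulg1 -invg_comm.
    by rewrite psiV // invgK.
  rewrite /engel_comm iterS -/(engel_comm a (a * z^-1) n.+1) IH.
  rewrite [in RHS]iterS commgMJ.
  have Hi : iter n.+1 (fun y => [~ y, a]) z \in H by rewrite RH // iterR.
  rewrite (cH _ z^-1) ?groupV // mul1g cJ ?groupV //.
  by rewrite RH // psiR // iterR.
have [m Hm] := sinkT _ Gx.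
have : m <= (m.+1 * d).-1.+1.
  rewrite prednK ?muln_gt0 //.
  exact: leq_trans (leqnSn m) (leq_pmulr _ d_gt0).
move/Hm; rewrite eng prednK ?muln_gt0 // zkd.
exact.
Qed.
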